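(* Let $F$ be a continuous function defined on a rectangle $R=[a,b]\times[c,d]$ ($a<b$, $c<d$) with values in $\mathbb{R}^m$, and let $\mathcal{C}(F_{|\partial R})$ be the Coons patch interpolating $F$ on $\partial R$, namely $$\mathcal{C}(F_{|\partial R})(s,t)=\tfrac{b-s}{b-a}F(a,t)+\tfrac{s-a}{b-a}F(b,t)+\tfrac{d-t}{d-c}F(s,c)+\tfrac{t-c}{d-c}F(s,d)-B(s,t),$$ where $B(s,t)=\tfrac{b-s}{b-a}\big(\tfrac{d-t}{d-c}F(a,c)+\tfrac{t-c}{d-c}F(a,d)\big)+\tfrac{s-a}{b-a}\big(\tfrac{d-t}{d-c}F(b,c)+\tfrac{t-c}{d-c}F(b,d)\big)$. Then for all $(s,t)\in(a,b)\times(c,d)$, $$F(s,t)-\mathcal{C}(F_{|\partial R})(s,t)=\frac{(s-a)(s-b)(t-c)(t-d)}{(b-a)(d-c)}\Big([b,s;d,t]F-[s,a;d,t]F+[s,a;t,c]F-[b,s;t,c]F\Big).$$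
   Context: For a bivariate function $F$ and reals $\sigma_1\ne\sigma_2$, $\tau_1\ne\tau_2$, the mixed second divided difference is $[\sigma_1,\sigma_2;\tau_1,\tau_2]F=\frac{F(\sigma_1,\tau_1)+F(\sigma_2,\tau_2)-F(\sigma_2,\tau_1)-F(\sigma_1,\tau_2)}{(\sigma_1-\sigma_2)(\tau_1-\tau_2)}$. *)

(* Defs.v *)
From HB Require Import structures.
From mathcomp Require Import all_boot all_order all_algebra.
From mathcomp Require Import all_classical all_reals all_analysis.
Set Implicit Arguments. Unset Strict Implicit. Unset Printing Implicit Defensive.
Import Order.TTheory GRing.Theory Num.Theory.
Local Open Scope ring_scope.

Definition mixed_dd (R : realType) (m : nat) (F : R -> R -> 'rV[R]_m)
  (s1 s2 t1 t2 : R) : 'rV[R]_m :=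
  ((s1 - s2) * (t1 - t2))^-1 *: (F s1 t1 + F s2 t2 - F s2 t1 - F s1 t2).

Definition coons (R : realType) (m : nat) (F : R -> R -> 'rV[R]_m)
  (a b c d : R) (s t : R) : 'rV[R]_m :=
  let B := ((b - s) / (b - a)) *: (((d - t) / (d - c)) *: F a c + ((t - c) / (d - c)) *: F a d)
         + ((s - a) / (b - a)) *: (((d - t) / (d - c)) *: F b c + ((t - c) / (d - c)) *: F b d) in
  ((b - s) / (b - a)) *: F a t + ((s - a) / (b - a)) *: F b t
  + ((d - t) / (d - c)) *: F s c + ((t - c) / (d - c)) *: F s d - B.

(* Main.v *)
Require Import Defs.
From HB Require Import structures.
From mathcomp Require Import all_boot all_order all_algebra.
From mathcomp Require Import all_classical all_reals all_analysis.
From mathcomp Require Import ring.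
Import Order.TTheory GRing.Theory Num.Theory.
Import numFieldNormedType.Exports.
Local Open Scope ring_scope.

Theorem proposition1 (R : realType) (m : nat) (F : R -> R -> 'rV[R]_m)
  (a b c d : R) (hab : a < b) (hcd : c < d)
  (hF : forall i : 'I_m,
     {within (`[a, b] `*` `[c, d])%classic,
        continuous (fun p : R * R => F p.1 p.2 ord0 i)}%classic) :
  forall s t : R, a < s < b -> c < t < d ->
    F s t - coons F a b c d s t =
    ((s - a) * (s - b) * (t - c) * (t - d) / ((b - a) * (d - c))) *:
      (mixed_dd F b s d t - mixed_dd F s a d t + mixed_dd F s a t c
       - mixed_dd F b s t c).
Proof.
move=> s t /andP[has hsb] /andP[hct htd].
apply/rowP => j; rewrite /mixed_dd /coons !mxE.
have h1 : b - a != 0 by rewrite subr_eq0 gt_eqF.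
have h2 : d - c != 0 by rewrite subr_eq0 gt_eqF.
have h3 : b - s != 0 by rewrite subr_eq0 gt_eqF.
have h4 : s - a != 0 by rewrite subr_eq0 gt_eqF.
have h5 : d - t != 0 by rewrite subr_eq0 gt_eqF.
have h6 : t - c != 0 by rewrite subr_eq0 gt_eqF.
have h7 : s - b != 0 by rewrite subr_eq0 lt_eqF.
have h8 : t - d != 0 by rewrite subr_eq0 lt_eqF.
field; by rewrite h1 h2 h3 h4 h5 h6.
Qed.
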